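(* Let $n\ge2$, $1\le k\le n-1$, $r\ge1$. Let $h$ be continuous on $[l_F,r_F]$ with $h^{(k+r-1)}$ continuous on $(l_F,r_F)$. If $l_F>-\infty$, $r_F=\infty$ and $F(x)=1-e^{-c(x-l_F)}$ for $x\ge l_F$ with some $c>0$, then \[ E[h^{(k+r-1)}(X(n))\mid X(n-k)=u,\ X(n+r)=v]=\frac{(k+r-1)!}{(k-1)!(r-1)!}\,{}_{r-1}M_{k-1}(u,v)\qquad (l_F<u<v<r_F). \]
   Context: $X_1,X_2,\dots$ are i.i.d. copies of a random variable $X$ with distribution function $F$; $l_F=\inf\{x:F(x)>0\}$, $r_F=\sup\{x:F(x)<1\}$. Upper record times: $L(1)=1$, $L(m)=\min\{j>L(m-1): X_j>X_{L(m-1)}\}$; upper record values $X(m)=X_{L(m)}$. With $R(x)=-\ln(1-F(x))$, conditional expectations given $X(n-k)=u$, $X(n+r)=v$ are taken with respect to the conditional density $\frac{(k+r-1)!}{(k-1)!(r-1)!}[\frac{R(t)-R(u)}{R(v)-R(u)}]^{k-1}[\frac{R(v)-R(t)}{R(v)-R(u)}]^{r-1}\frac{R'(t)}{R(v)-R(u)}$, $u<t<v$. For a function $h$, $M(u,v)=\frac{h(v)-h(u)}{v-u}$ ($u\ne v$) and ${}_iM_j(u,v)=\frac{\partial^{i+j}}{\partial u^i\partial v^j}M(u,v)$. *)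

(* Defs.v *)
From Stdlib Require Import Reals Lra Lia Arith Factorial.
Open Scope R_scope.

Definition Rhaz (F : R -> R) (x : R) : R := - ln (1 - F x).

Definition coefKR (k r : nat) : R :=
  INR (fact (k + r - 1)) / (INR (fact (k - 1)) * INR (fact (r - 1))).

(* Conditional density of X(n) at t given X(n-k)=u, X(n+r)=v;
   Rp is the derivative R' of R. *)
Definition cond_density (F Rp : R -> R) (k r : nat) (u v t : R) : R :=
  coefKR k r
  * ((Rhaz F t - Rhaz F u) / (Rhaz F v - Rhaz F u)) ^ (k - 1)
  * ((Rhaz F v - Rhaz F t) / (Rhaz F v - Rhaz F u)) ^ (r - 1)
  * (Rp t / (Rhaz F v - Rhaz F u)).

Definition is_integral (f : R -> R) (a b I : R) : Prop :=
  exists pr : Riemann_integrable f a b, RiemannInt pr = I.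

(* E[g(X(n)) | X(n-k)=u, X(n+r)=v] = I, i.e. the integral of g against
   the conditional density over (u,v) exists and equals I. *)
Definition cond_exp_is (F Rp : R -> R) (k r : nat) (g : R -> R) (u v I : R) : Prop :=
  is_integral (fun t => g t * cond_density F Rp k r u v t) u v I.

Definition Mdiff (h : R -> R) (u v : R) : R := (h v - h u) / (v - u).

Definition derivs_upto (h : R -> R) (Dh : nat -> R -> R) (m : nat) (a : R) : Prop :=
  (forall x, a < x -> Dh 0%nat x = h x) /\
  (forall j x, (j < m)%nat -> a < x -> derivable_pt_lim (Dh j) x (Dh (S j) x)).

(* P i j = d^{i+j}/du^i dv^j M on the open set {(u,v) : a < u < v},
   for j <= jm (with i = 0) and i <= im (with j = jm):
   first jm derivatives in v, then im derivatives in u. *)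
Definition mixed_partials (M : R -> R -> R) (P : nat -> nat -> R -> R -> R)
    (im jm : nat) (a : R) : Prop :=
  (forall x y, a < x -> x < y -> P 0%nat 0%nat x y = M x y) /\
  (forall j x y, (j < jm)%nat -> a < x -> x < y ->
     derivable_pt_lim (fun w => P 0%nat j x w) y (P 0%nat (S j) x y)) /\
  (forall i x y, (i < im)%nat -> a < x -> x < y ->
     derivable_pt_lim (fun w => P i jm w y) x (P (S i) jm x y)).

(* Main.v *)
Require Import Defs.
From Stdlib Require Import Reals Lra Lia Arith Factorial Classical ClassicalEpsilon FunctionalExtensionality.
Open Scope R_scope.

Definition Int (f : R -> R) (x y : R) : R :=
  match excluded_middle_informative (exists I, is_integral f x y I) with
  | left H => proj1_sig (constructive_indefinite_description _ H)
  | right _ => 0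
  end.

Lemma Int_eq f x y (pr : Riemann_integrable f x y) : Int f x y = RiemannInt pr.
Proof.
  unfold Int. destruct excluded_middle_informative as [H|H].
  - destruct (constructive_indefinite_description _ H) as [I [pr' HI]]; simpl.
    rewrite <- HI. apply RiemannInt_P5.
  - exfalso; apply H. exists (RiemannInt pr), pr; reflexivity.
Qed.

Definition contc (l : R) (f : R -> R) := forall t, l < t -> continuity_pt f t.

Lemma Int_ri l f x y : contc l f -> l < x -> l < y -> Riemann_integrable f x y.
Proof.
  intros Hc Hx Hy. destruct (Rle_dec x y) as [H|H].
  - apply continuity_implies_RiemannInt; auto. intros t Ht; apply Hc; lra.
  - apply RiemannInt_P1. apply continuity_implies_RiemannInt; [lra|].
    intros t Ht; apply Hc; lra.
Qed.

Lemma Int_xx f x : Int f x x = 0.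
Proof. rewrite (Int_eq _ _ _ (RiemannInt_P7 f x)). apply RiemannInt_P9. Qed.

Lemma Int_chasles l f x y z : contc l f -> l < x -> l < y -> l < z ->
  Int f x y + Int f y z = Int f x z.
Proof.
  intros Hc Hx Hy Hz.
  rewrite (Int_eq _ _ _ (Int_ri l f x y Hc Hx Hy)),
          (Int_eq _ _ _ (Int_ri l f y z Hc Hy Hz)),
          (Int_eq _ _ _ (Int_ri l f x z Hc Hx Hz)).
  apply RiemannInt_P26.
Qed.

Lemma dl_eq f x l1 l2 : derivable_pt_lim f x l1 -> l1 = l2 -> derivable_pt_lim f x l2.
Proof. intros H ->; exact H. Qed.

Lemma FTC1 l f x y : contc l f -> l < x -> l < y ->
  derivable_pt_lim (fun z => Int f x z) y (f y).
Proof.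
  intros Hc Hx Hy.
  set (a := (l + Rmin x y) / 2). set (b := Rmax x y + 1).
  assert (Hal : l < a) by (unfold a; pose proof (Rmin_glb_lt x y l Hx Hy); lra).
  assert (Hax : a < x) by (unfold a; pose proof (Rmin_l x y); lra).
  assert (Hay : a < y) by (unfold a; pose proof (Rmin_r x y); lra).
  assert (Hxb : x < b) by (unfold b; pose proof (Rmax_l x y); lra).
  assert (Hyb : y < b) by (unfold b; pose proof (Rmax_r x y); lra).
  assert (hab : a <= b) by lra.
  assert (C0 : forall t, a <= t <= b -> continuity_pt f t) by (intros t Ht; apply Hc; lra).
  set (pr := FTC_P1 hab C0).
  assert (Hp : forall z, a <= z <= b -> primitive hab pr z = Int f a z).
  { intros z Hz. unfold primitive. destruct (Rle_dec a z); [|lra].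
    destruct (Rle_dec z b); [|lra]. symmetry; apply Int_eq. }
  apply (derivable_pt_lim_locally_ext (fun z => primitive hab pr z - primitive hab pr x) _ y a b).
  - lra.
  - intros z Hz. rewrite !Hp by lra.
    rewrite <- (Int_chasles l f a x z); auto; lra.
  - eapply dl_eq.
    + apply (derivable_pt_lim_minus (fun z => primitive hab pr z) (fct_cte (primitive hab pr x))).
      * apply RiemannInt_P28; lra.
      * apply derivable_pt_lim_const.
    + ring.
Qed.
Lemma FTC1x l f x y : contc l f -> l < x -> l < y ->
  derivable_pt_lim (fun z => Int f z y) x (- f x).
Proof.
  intros Hc Hx Hy.
  apply (derivable_pt_lim_locally_ext (fun z => - Int f y z) _ x l (x+1)).
  - lra.
  - intros z Hz. pose proof (Int_chasles l f z y z Hc ltac:(lra) Hy ltac:(lra)).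
    rewrite Int_xx in H. lra.
  - apply (derivable_pt_lim_opp (fun z => Int f y z)). apply FTC1 with l; auto.
Qed.

Lemma const_of_d0 l H x y : (forall t, l < t -> derivable_pt_lim H t 0) ->
  l < x -> l < y -> H x = H y.
Proof.
  intros Hd Hx Hy.
  assert (K : forall a b, l < a -> a <= b -> H a = H b).
  { intros a b Ha Hab.
    assert (pr : forall t, a < t < b -> derivable_pt H t).
    { intros t Ht. exists 0. apply Hd; lra. }
    assert (Hc : forall t, a <= t <= b -> continuity_pt H t).
    { intros t Ht. apply derivable_continuous_pt. exists 0. apply Hd; lra. }
    assert (Hz : forall t (P : a < t < b), derive_pt H t (pr t P) = 0).
    { intros t P. apply derive_pt_eq_0. apply Hd; lra. }
    pose proof (null_derivative_loc H a b pr Hc Hz) as Hn.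
    unfold constant_D_eq in Hn. symmetry. apply Hn; lra. }
  destruct (Rle_dec x y); [apply K; lra|symmetry; apply K; lra].
Qed.

Lemma FTC2 l f G x y : contc l f -> (forall t, l < t -> derivable_pt_lim G t (f t)) ->
  l < x -> l < y -> Int f x y = G y - G x.
Proof.
  intros Hc HG Hx Hy.
  assert (E : (fun z => Int f x z - G z) y = (fun z => Int f x z - G z) x).
  { apply (const_of_d0 l (fun z => Int f x z - G z)); auto. intros t Ht.
    eapply dl_eq. apply (derivable_pt_lim_minus (fun z => Int f x z) G).
    apply FTC1 with l; auto. apply HG; auto. ring. }
  simpl in E. rewrite Int_xx in E. lra.
Qed.

Lemma cont_mult f g t : continuity_pt f t -> continuity_pt g t -> continuity_pt (fun s => f s * g s) t.
Proof. intros; apply (continuity_pt_mult f g); auto. Qed.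
Lemma cont_plus f g t : continuity_pt f t -> continuity_pt g t -> continuity_pt (fun s => f s + g s) t.
Proof. intros; apply (continuity_pt_plus f g); auto. Qed.
Lemma cont_const c t : continuity_pt (fun _ => c) t.
Proof. apply (continuity_pt_const (fct_cte c)). intros a b; reflexivity. Qed.
Lemma cont_of_d f t d : derivable_pt_lim f t d -> continuity_pt f t.
Proof. intros H. apply derivable_continuous_pt. exists d; exact H. Qed.

Lemma Int_lin l g1 g2 c1 c2 x y : contc l g1 -> contc l g2 -> l < x -> l < y ->
  Int (fun t => c1 * g1 t + c2 * g2 t) x y = c1 * Int g1 x y + c2 * Int g2 x y.
Proof.
  intros H1 H2 Hx Hy.
  rewrite (FTC2 l _ (fun z => c1 * Int g1 x z + c2 * Int g2 x z) x y); auto.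
  - rewrite !Int_xx; ring.
  - intros t Ht. apply cont_plus; apply cont_mult; auto using cont_const.
  - intros t Ht. eapply dl_eq.
    apply (derivable_pt_lim_plus (fun z => c1 * Int g1 x z) (fun z => c2 * Int g2 x z)).
    apply (derivable_pt_lim_scal (fun z => Int g1 x z)). apply FTC1 with l; auto.
    apply (derivable_pt_lim_scal (fun z => Int g2 x z)). apply FTC1 with l; auto.
    reflexivity.
Qed.

Definition K (f : R -> R) (a i : nat) (x y : R) : R :=
  Int (fun t => f t * (t - x) ^ a * (y - t) ^ i) x y.

Lemma d_lin1 x t : derivable_pt_lim (fun s => s - x) t 1.
Proof.
  eapply dl_eq. apply (derivable_pt_lim_minus id (fct_cte x)).
  apply derivable_pt_lim_id. apply derivable_pt_lim_const. ring.
Qed.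
Lemma d_lin2 y t : derivable_pt_lim (fun s => y - s) t (-1).
Proof.
  eapply dl_eq. apply (derivable_pt_lim_minus (fct_cte y) id).
  apply derivable_pt_lim_const. apply derivable_pt_lim_id. ring.
Qed.
Lemma d_powf u du t n : derivable_pt_lim u t du ->
  derivable_pt_lim (fun s => u s ^ n) t (INR n * u t ^ pred n * du).
Proof.
  intros H. apply (derivable_pt_lim_comp u (fun z => z ^ n) t du (INR n * u t ^ pred n) H).
  apply derivable_pt_lim_pow.
Qed.
Lemma d_mult f g t df dg : derivable_pt_lim f t df -> derivable_pt_lim g t dg ->
  derivable_pt_lim (fun s => f s * g s) t (df * g t + f t * dg).
Proof. intros; apply (derivable_pt_lim_mult f g); auto. Qed.
Lemma d_plus f g t df dg : derivable_pt_lim f t df -> derivable_pt_lim g t dg ->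
  derivable_pt_lim (fun s => f s + g s) t (df + dg).
Proof. intros; apply (derivable_pt_lim_plus f g); auto. Qed.
Lemma d_const c t : derivable_pt_lim (fun _ => c) t 0.
Proof. apply (derivable_pt_lim_const c). Qed.

Lemma cont_powl x a t : continuity_pt (fun s => (s - x) ^ a) t.
Proof. eapply cont_of_d. apply d_powf. apply d_lin1. Qed.
Lemma cont_powr y a t : continuity_pt (fun s => (y - s) ^ a) t.
Proof. eapply cont_of_d. apply d_powf. apply d_lin2. Qed.

Ltac contac := intros ?t ?Ht; repeat (apply cont_plus || apply cont_mult);
  first [ apply cont_const | apply cont_powl | apply cont_powr | auto ].

Lemma contc_W l f x y a i : contc l f -> contc l (fun t => f t * (t - x) ^ a * (y - t) ^ i).
Proof. intros Hf. contac. Qed.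

Lemma REL l f a i z y : contc l f -> l < z -> l < y ->
  K f (S a) i z y = (y - z) * K f a i z y + (-1) * K f a (S i) z y.
Proof.
  intros Hf Hz Hy. unfold K.
  rewrite <- (Int_lin l); try apply contc_W; auto.
  f_equal. apply functional_extensionality. intros t. simpl. ring.
Qed.

Lemma LB l f y : contc l f -> l < y -> forall a i x, l < x ->
  derivable_pt_lim (fun z => K f a i z y) x
    (- (f x * (x - x) ^ a * (y - x) ^ i) - INR a * K f (pred a) i x y).
Proof.
  intros Hf Hy a. induction a as [|a IH]; intros i x Hx.
  - unfold K. simpl.
    eapply dl_eq. apply (FTC1x l (fun t => f t * 1 * (y - t) ^ i)); auto.
    contac. ring.
  - apply (derivable_pt_lim_locally_ext
      (fun z => (y - z) * K f a i z y + (-1) * K f a (S i) z y) _ x l (x+1)).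
    + lra.
    + intros z Hz. symmetry. apply REL with l; auto. lra.
    + eapply dl_eq.
      * apply d_plus. apply d_mult. apply d_lin2. apply IH; auto.
        apply d_mult. apply d_const. apply IH; auto.
      * destruct a as [|a].
        -- simpl. set (Q := (y - x) ^ i). set (K1 := K f 0 i x y). set (K2 := K f 0 (S i) x y). ring.
        -- simpl pred. rewrite (REL l f a i x y) by auto.
           rewrite !S_INR. simpl. ring.
Qed.

Lemma IBP l f f' a i x y : contc l f -> contc l f' ->
  (forall t, l < t -> derivable_pt_lim f t (f' t)) -> l < x -> l < y ->
  K f' a i x y = f y * ((y - x) ^ a * (y - y) ^ i) - f x * ((x - x) ^ a * (y - x) ^ i)
     - INR a * K f (pred a) i x y + INR i * K f a (pred i) x y.
Proof.
  intros Hf Hf' Hd Hx Hy.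
  set (phi := fun t => 1 * (f' t * (t - x) ^ a * (y - t) ^ i) +
     1 * (INR a * (f t * (t - x) ^ (pred a) * (y - t) ^ i)
          + (- INR i) * (f t * (t - x) ^ a * (y - t) ^ (pred i)))).
  assert (E1 : Int phi x y = f y * ((y - x) ^ a * (y - y) ^ i) - f x * ((x - x) ^ a * (y - x) ^ i)).
  { apply (FTC2 l phi (fun t => f t * ((t - x) ^ a * (y - t) ^ i))); auto.
    - unfold phi; contac.
    - intros t Ht. eapply dl_eq. apply d_mult. apply Hd; auto.
      apply d_mult; apply d_powf. apply d_lin1. apply d_lin2.
      unfold phi. ring. }
  assert (E2 : Int phi x y = K f' a i x y + (INR a * K f (pred a) i x y + - INR i * K f a (pred i) x y)).
  { unfold phi, K. rewrite (Int_lin l); try apply contc_W; auto.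
    rewrite (Int_lin l); try apply contc_W; auto. ring.
    intros t Ht. apply cont_plus; apply cont_mult; first [apply cont_const | apply (contc_W l); auto]. }
  lra.
Qed.

Definition Pm (Dh : nat -> R -> R) (i j : nat) (x y : R) : R :=
  K (Dh (S (i + j))) j i x y / (y - x) ^ (S (i + j)).

Lemma Ystep l (Dh : nat -> R -> R) m :
  (forall j t, (j < m)%nat -> l < t -> derivable_pt_lim (Dh j) t (Dh (S j) t)) ->
  (forall j, (j <= m)%nat -> contc l (Dh j)) ->
  forall j x y, (S j < m)%nat -> l < x -> x < y ->
  derivable_pt_lim (fun w => Pm Dh 0 j x w) y (Pm Dh 0 (S j) x y).
Proof.
  intros Hd Hc j x y Hj Hx Hxy.
  assert (Hy : l < y) by lra.
  unfold Pm. simpl Nat.add.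
  set (g := Dh (S j)). set (g' := Dh (S (S j))).
  assert (cg : contc l g) by (apply Hc; lia).
  assert (cg' : contc l g') by (apply Hc; lia).
  rewrite (IBP l g g' (S j) 0 x y); auto.
  2: { intros t Ht. apply Hd; auto. }
  eapply dl_eq.
  - apply (derivable_pt_lim_div (fun w => K g j 0 x w) (fun w => (w - x) ^ S j)).
    + unfold K. apply (FTC1 l (fun t => g t * (t - x) ^ j * 1) x y); auto.
      contac.
    + apply d_powf. apply d_lin1.
    + apply pow_nonzero. lra.
  - replace (x - x) with 0 by ring. replace (y - y) with 0 by ring.
    assert (HD : y - x <> 0) by lra.
    assert (HE : (y - x) ^ j <> 0) by (apply pow_nonzero; lra).
    simpl pred. unfold Rsqr. simpl pow. rewrite S_INR. simpl INR.
    field. auto.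
Qed.

Lemma Xstep l (Dh : nat -> R -> R) m :
  (forall j t, (j < m)%nat -> l < t -> derivable_pt_lim (Dh j) t (Dh (S j) t)) ->
  (forall j, (j <= m)%nat -> contc l (Dh j)) ->
  forall i a x y, (S (i + a) < m)%nat -> l < x -> x < y ->
  derivable_pt_lim (fun w => Pm Dh i a w y) x (Pm Dh (S i) a x y).
Proof.
  intros Hd Hc i a x y Hj Hx Hxy.
  assert (Hy : l < y) by lra.
  unfold Pm. simpl Nat.add.
  set (g := Dh (S (i + a))). set (g' := Dh (S (S (i + a)))).
  assert (cg : contc l g) by (apply Hc; lia).
  assert (cg' : contc l g') by (apply Hc; lia).
  rewrite (IBP l g g' a (S i) x y); auto.
  2: { intros t Ht. apply Hd; auto. }
  assert (HR : INR a * K g (pred a) (S i) x y = INR a * ((y - x) * K g (pred a) i x y - K g a i x y)).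
  { destruct a as [|a]. simpl; ring. simpl pred. rewrite (REL l g a i x y); auto. ring. }
  eapply dl_eq.
  - apply (derivable_pt_lim_div (fun w => K g a i w y) (fun w => (y - w) ^ S (i + a))).
    + apply (LB l); auto.
    + apply d_powf. apply d_lin2.
    + apply pow_nonzero. lra.
  - rewrite HR. replace (y - y) with 0 by ring.
    assert (HD : y - x <> 0) by lra.
    assert (HE : (y - x) ^ (i + a) <> 0) by (apply pow_nonzero; lra).
    simpl pred. unfold Rsqr.
    replace ((y - x) ^ S (S (i + a))) with ((y - x) * ((y - x) * (y - x) ^ (i + a))) by (simpl; ring).
    replace ((y - x) ^ S (i + a)) with ((y - x) * (y - x) ^ (i + a)) by (simpl; ring).
    replace ((y - x) ^ S i) with ((y - x) * (y - x) ^ i) by (simpl; ring).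
    rewrite !S_INR, plus_INR. simpl pow. rewrite Rmult_0_l.
    set (Z := (x - x) ^ a) in *. set (Q := (y - x) ^ i) in *. set (E := (y - x) ^ (i + a)) in *.
    set (K1 := K g (pred a) i x y). set (K2 := K g a i x y).
    field. auto.
Qed.

Theorem lemma2 (n k r : nat) (F h Rp : R -> R) (Dh : nat -> R -> R) (l c : R) :
  (2 <= n)%nat -> (1 <= k)%nat -> (k <= n - 1)%nat -> (1 <= r)%nat ->
  0 < c ->
  (* F is the exponential distribution function with l_F = l, r_F = +oo *)
  (forall x, x < l -> F x = 0) ->
  (forall x, l <= x -> F x = 1 - exp (- c * (x - l))) ->
  (* Rp = R' on (l_F, r_F) *)
  (forall t, l < t -> derivable_pt_lim (Rhaz F) t (Rp t)) ->
  (* h continuous on [l_F, r_F) = [l, +oo) *)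
  (forall x, l <= x -> forall eps, 0 < eps -> exists delta, 0 < delta /\
      forall y, l <= y -> Rabs (y - x) < delta -> Rabs (h y - h x) < eps) ->
  (* h^{(j)}, j <= k+r-1, exist on (l, +oo) and h^{(k+r-1)} is continuous there *)
  derivs_upto h Dh (k + r - 1) l ->
  (forall x, l < x -> continuity_pt (Dh (k + r - 1)%nat) x) ->
  forall u v, l < u -> u < v ->
  exists P : nat -> nat -> R -> R -> R,
    mixed_partials (Mdiff h) P (r - 1) (k - 1) l /\
    cond_exp_is F Rp k r (Dh (k + r - 1)%nat) u v
      (coefKR k r * P (r - 1)%nat (k - 1)%nat u v).
Proof.
  intros Hn Hk Hkn Hr Hc0 HF0 HF HRp Hh [HD0 HDs] HDc u v Hu Huv.
  set (m := (k + r - 1)%nat) in *.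
  assert (Hd : forall j t, (j < m)%nat -> l < t -> derivable_pt_lim (Dh j) t (Dh (S j) t))
    by (intros; apply HDs; auto).
  assert (Hc : forall j, (j <= m)%nat -> contc l (Dh j)).
  { intros j Hj t Ht. destruct (Nat.eq_dec j m) as [->|Hne]. apply HDc; auto.
    eapply cont_of_d. apply Hd; auto. lia. }
  exists (Pm Dh). split; [split; [|split]|].
  - intros x y Hx Hxy. unfold Pm, Mdiff, K. simpl Nat.add.
    rewrite (FTC2 l _ (Dh 0%nat) x y); auto; try lra.
    + rewrite !HD0 by lra. simpl. field. lra.
    + contac. apply Hc; auto; lia.
    + intros t Ht. eapply dl_eq. apply Hd; auto. unfold m; lia. simpl; ring.
  - intros j x y Hj Hx Hxy. apply (Ystep l Dh m); auto. unfold m; lia.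
  - intros i x y Hi Hx Hxy. apply (Xstep l Dh m); auto. unfold m; lia.
  - assert (HR : forall z, l <= z -> Rhaz F z = c * (z - l)).
    { intros z Hz. unfold Rhaz. rewrite HF by auto.
      replace (1 - (1 - exp (- c * (z - l)))) with (exp (- c * (z - l))) by ring.
      rewrite ln_exp. ring. }
    assert (HRp' : forall t, l < t -> Rp t = c).
    { intros t Ht. apply (uniqueness_limite (Rhaz F) t). apply HRp; auto.
      apply (derivable_pt_lim_locally_ext (fun z => c * (z - l)) _ t l (t + 1)).
      lra. intros z Hz. rewrite HR; lra.
      eapply dl_eq. apply (derivable_pt_lim_scal (fun z => z - l)). apply d_lin1. ring. }
    assert (Hm : m = S (r - 1 + (k - 1))) by (unfold m; lia).
    unfold Pm. rewrite <- Hm.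
    set (a := (k - 1)%nat). set (b := (r - 1)%nat).
    set (C := coefKR k r / (v - u) ^ m).
    set (W := fun t => Dh m t * (t - u) ^ a * (v - t) ^ b).
    set (phi := fun t => C * W t + 0 * W t).
    assert (cW : contc l W) by (apply contc_W; apply Hc; lia).
    assert (cphi : contc l phi) by (unfold phi; contac).
    pose proof (Int_ri l phi u v cphi Hu ltac:(lra)) as pr.
    assert (Heq : forall t, u <= t <= v -> phi t = Dh m t * cond_density F Rp k r u v t).
    { intros t Ht. unfold phi, W, C, cond_density.
      rewrite !HR by lra. rewrite HRp' by lra.
      replace (c * (t - l) - c * (u - l)) with (c * (t - u)) by ring.
      replace (c * (v - l) - c * (t - l)) with (c * (v - t)) by ring.
      replace (c * (v - l) - c * (u - l)) with (c * (v - u)) by ring.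
      replace (c * (t - u) / (c * (v - u))) with ((t - u) * / (v - u)) by (field; split; lra).
      replace (c * (v - t) / (c * (v - u))) with ((v - t) * / (v - u)) by (field; split; lra).
      rewrite !Rpow_mult_distr, !pow_inv. change (k - 1)%nat with a. change (r - 1)%nat with b.
      replace ((v - u) ^ m) with ((v - u) * ((v - u) ^ b * (v - u) ^ a))
        by (rewrite Hm, <- pow_add; simpl; unfold a, b; ring).
      assert (H1 : (v - u) ^ a <> 0) by (apply pow_nonzero; lra).
      assert (H2 : (v - u) ^ b <> 0) by (apply pow_nonzero; lra).
      set (A1 := (v - u) ^ a) in *. set (B1 := (v - u) ^ b) in *.
      set (A2 := (t - u) ^ a). set (B2 := (v - t) ^ b).
      field. repeat split; lra. }
    assert (pr' : Riemann_integrable (fun t => Dh m t * cond_density F Rp k r u v t) u v).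
    { refine (@Riemann_integrable_ext phi _ u v _ pr).
      intros t. rewrite Rmin_left, Rmax_right by lra. apply Heq. }
    exists pr'. rewrite <- (@RiemannInt_P18 phi _ u v pr pr').
    2: lra. 2: { intros t Ht; apply Heq; lra. }
    rewrite <- Int_eq. unfold phi. rewrite (Int_lin l); auto; try lra.
    unfold K, C. fold W. field. apply pow_nonzero; lra.
Qed.
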